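(* Let $A$ be a nonnegative random variable with a probability density function on $[0,\infty)$ and $\mathbf{E}[A]=1$, and fix $\beta\ge 0$. For $\rho>0$ define $$R(\rho)=\mathbf{E}\left[\log \frac{(\rho+1)^2\left[(1+\beta)A\rho+1\right]}{(\beta+1)\rho^2+(\beta A+2)\rho+1}\right],\qquad \bar C(\rho)=\mathbf{E}\left[\log(1+A\rho)\right].$$ Then $\lim_{\rho\to\infty}\left(\bar C(\rho)-R(\rho)\right)=0$ and $\lim_{\rho\to 0^+} R(\rho)/\bar C(\rho)=1$.
   Context: Interpretation: this concerns the channel $Y=\sqrt{A}(X+S)+Z$ with $Z\sim\mathcal{CN}(0,N)$, interference $S\sim\mathcal{CN}(0,Q)$ known noncausally to the encoder only, i.i.d. (ergodic) fading $A$ independent of $S$ known to the decoder only, input power $P$, SNR $\rho=P/N$ and interference-to-power ratio $\beta=Q/P$. $R(\rho)=I(U;Y|A)-I(U;S)$ is the rate of the dirty paper coding scheme with $X\sim\mathcal{CN}(0,P)$ independent of $S$ and auxiliary $U=X+\alpha S$, $\alpha=\rho/(1+\rho)$; $\bar C(\rho)$ is the capacity when the decoder also knows $S$. Logarithms are natural. *)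

(* Defs.v *)
From HB Require Import structures.
From mathcomp Require Import all_boot all_order all_algebra.
From mathcomp Require Import all_classical all_reals all_analysis.
Set Implicit Arguments. Unset Strict Implicit. Unset Printing Implicit Defensive.
Import Order.TTheory GRing.Theory Num.Theory.
Import numFieldNormedType.Exports.
Local Open Scope classical_set_scope.
Local Open Scope ring_scope.

Definition has_pdf d (T : measurableType d) (R : realType) (P : probability T R)
  (X : {RV P >-> R}) : Prop :=
  exists f : R -> R, (forall x, 0 <= f x) /\ measurable_fun setT f /\
    forall B : set R, measurable B ->
      distribution P X B = (\int[lebesgue_measure]_(x in B) (f x)%:E)%E.

Definition dpc_rate d (T : measurableType d) (R : realType) (P : probability T R)
  (A : T -> R) (beta rho : R) : R :=
  fine ('E_P[fun t => ln ((rho + 1) ^+ 2 * ((1 + beta) * A t * rho + 1) /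
        ((beta + 1) * rho ^+ 2 + (beta * A t + 2) * rho + 1))])%E.

Definition cap_known d (T : measurableType d) (R : realType) (P : probability T R)
  (A : T -> R) (rho : R) : R :=
  fine ('E_P[fun t => ln (1 + A t * rho)])%E.

(* Main.v *)
Require Import Defs.
From HB Require Import structures.
From mathcomp Require Import all_boot all_order all_algebra.
From mathcomp Require Import all_classical all_reals all_analysis.
From mathcomp Require Import lra ring.
Import Order.TTheory GRing.Theory Num.Theory.
Import numFieldNormedType.Exports.
Local Open Scope classical_set_scope.
Local Open Scope ring_scope.

Section Alg.
Variable R : realType.
Implicit Types (b r x : R).

Definition numf b r x : R := (r + 1) ^+ 2 * ((1 + b) * x * r + 1).
Definition denf b r x : R := (b + 1) * r ^+ 2 + (b * x + 2) * r + 1.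
Definition Hf b r x : R := ln (1 + x * r) + ln (denf b r x) - ln (numf b r x).

Lemma numf_gt0 b r x : 0 <= b -> 0 < r -> 0 <= x -> 0 < numf b r x.
Proof.
move=> b0 r0 x0; rewrite /numf; apply: mulr_gt0; first by apply: exprn_gt0; lra.
have : 0 <= (1 + b) * x * r by rewrite !mulr_ge0 //; lra.
lra.
Qed.

Lemma denf_gt0 b r x : 0 <= b -> 0 < r -> 0 <= x -> 0 < denf b r x.
Proof.
move=> b0 r0 x0; rewrite /denf.
have h1 : 0 <= (b + 1) * r ^+ 2 by rewrite mulr_ge0 ?exprn_ge0 //; lra.
have h2 : 0 <= (b * x + 2) * r by rewrite mulr_ge0 //; [rewrite addr_ge0 ?mulr_ge0 | lra].
lra.
Qed.

Lemma dpc_int_eq b r x : 0 <= b -> 0 < r -> 0 <= x ->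
  ln (numf b r x / denf b r x) = ln (1 + x * r) - Hf b r x.
Proof.
move=> b0 r0 x0; rewrite ln_div ?posrE ?numf_gt0 ?denf_gt0 //.
rewrite /Hf; ring.
Qed.

Lemma Hf_bound b r x : 0 <= b -> 0 < r -> 0 <= x ->
  0 <= Hf b r x <= b * r ^+ 2 * (1 - x) ^+ 2 / numf b r x.
Proof.
move=> b0 r0 x0.
have hn := numf_gt0 b r x b0 r0 x0; have hd := denf_gt0 b r x b0 r0 x0.
have h1 : 0 < 1 + x * r by nra.
set q := b * r ^+ 2 * (1 - x) ^+ 2 / numf b r x.
have q0 : 0 <= q.
  apply: divr_ge0; last exact: ltW.
  rewrite mulr_ge0 ?sqr_ge0 // mulr_ge0 ?sqr_ge0 //.
idtac.
have hp : 0 < (1 + x * r) * denf b r x by apply: mulr_gt0.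
have -> : Hf b r x = ln (1 + q).
  rewrite /Hf -lnM ?posrE // -ln_div ?posrE //.
  have -> : (1 + x * r) * denf b r x / numf b r x = 1 + q; last by [].
  rewrite /q /numf /denf; field.
  have : 0 <= (1 + b) * x * r by rewrite !mulr_ge0 //; lra.
  by move=> ?; apply/andP; split; rewrite gt_eqF //; lra.
apply/andP; split; first by apply: ln_ge0; lra.
by apply: le_ln1Dx; lra.
Qed.


Definition Qf b r x : R := b * r ^+ 2 * (1 - x) ^+ 2 / numf b r x.

Lemma Hf_Q b r x : 0 <= b -> 0 < r -> 0 <= x -> 0 <= Hf b r x <= Qf b r x.
Proof. exact: Hf_bound. Qed.

Lemma Kpos b r x : 0 <= b -> 0 < r -> 0 <= x -> 1 <= (1 + b) * x * r + 1.
Proof. move=> b0 r0 x0; have : 0 <= (1 + b) * x * r by rewrite !mulr_ge0 //; lra. lra. Qed.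

Lemma Q_B1 b r x : 0 <= b -> 1 <= r -> 0 <= x -> Qf b r x <= b * (1 + x).
Proof.
move=> b0 r1 x0; have r0 : 0 < r by lra.
rewrite /Qf ler_pdivrMr ?numf_gt0 // /numf.
have e1 : r ^+ 2 <= (r + 1) ^+ 2 by rewrite lerXn2r ?nnegrE; lra.
have e3 : x <= (1 + b) * x * r.
  have : x * 1 <= x * ((1 + b) * r) by rewrite ler_wpM2l //; nra.
  by rewrite mulr1 mulrA [x * _]mulrC.
have e2 : (1 - x) ^+ 2 <= (1 + x) * ((1 + b) * x * r + 1).
  have : (1 - x) ^+ 2 <= (1 + x) * (x + 1).
    by rewrite -subr_ge0 (_ : _ - _ = 4%:R * x); [rewrite mulr_ge0 | ring].
  move=> /le_trans; apply; rewrite ler_wpM2l //; lra.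
have : r ^+ 2 * (1 - x) ^+ 2 <= (r + 1) ^+ 2 * ((1 + x) * ((1 + b) * x * r + 1)).
  by apply: ler_pM => //; rewrite sqr_ge0.
move=> /(ler_wpM2l b0) h.
by apply: le_trans (le_trans h _); rewrite le_eqVlt; apply/orP; left; apply/eqP; ring.
Qed.

Lemma Q_B2 b r x : 0 <= b -> 0 < r -> 0 < x -> Qf b r x <= b * (1 - x) ^+ 2 / x / r.
Proof.
move=> b0 r0 x0.
rewrite /Qf ler_pdivrMr; last by apply: numf_gt0 => //; exact: ltW.
rewrite /numf.
have h : b * (1 - x) ^+ 2 / x / r * ((r + 1) ^+ 2 * ((1 + b) * x * r + 1))
   = b * (1 - x) ^+ 2 * ((r + 1) ^+ 2 * ((1 + b) * x * r + 1) / (x * r)).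
  by field; rewrite !gt_eqF.
rewrite h (_ : b * r ^+ 2 * (1 - x) ^+ 2 = b * (1 - x) ^+ 2 * r ^+ 2); last by ring.
apply: ler_wpM2l; first by rewrite mulr_ge0 ?sqr_ge0.
rewrite ler_pdivlMr ?mulr_gt0 //.
have e1 : r ^+ 2 <= (r + 1) ^+ 2 by rewrite lerXn2r ?nnegrE; lra.
have e3 : x * r <= (1 + b) * x * r + 1.
  have : 0 <= b * x * r by rewrite !mulr_ge0 // ltW.
  have -> : (1 + b) * x * r = x * r + b * x * r by ring.
  lra.
have : r ^+ 2 * (x * r) <= (r + 1) ^+ 2 * ((1 + b) * x * r + 1).
  by apply: ler_pM => //; rewrite ?sqr_ge0 ?mulr_ge0 // ltW.
by [].
Qed.

Lemma Q_B3 b r x : 0 <= b -> 0 < r -> r <= 1 -> 0 <= x -> Qf b r x / r <= b * (1 + x).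
Proof.
move=> b0 r0 r1 x0.
rewrite /Qf ler_pdivrMr // ler_pdivrMr ?numf_gt0 // /numf.
have e1 : 1 <= (r + 1) ^+ 2 by rewrite -[1](expr1n _ 2) lerXn2r ?nnegrE; lra.
have e3 : x * r <= (1 + b) * x * r.
  have : 0 <= b * x * r by rewrite !mulr_ge0 // ltW.
  have -> : (1 + b) * x * r = x * r + b * x * r by ring.
  lra.
have e2 : r * (1 - x) ^+ 2 <= (1 + x) * ((1 + b) * x * r + 1).
  have : r * (1 - x) ^+ 2 <= (1 + x) * (x * r + 1).
    rewrite -subr_ge0.
    have -> : (1 + x) * (x * r + 1) - r * (1 - x) ^+ 2 = (1 - r) + x + 3%:R * (x * r) by ring.
    have : 0 <= 3%:R * (x * r) by rewrite !mulr_ge0 // ltW.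
    lra.
  move=> /le_trans; apply; rewrite ler_wpM2l //; lra.
have : 1 * (r * (1 - x) ^+ 2) <= (r + 1) ^+ 2 * ((1 + x) * ((1 + b) * x * r + 1)).
  by apply: ler_pM => //; rewrite mulr_ge0 ?sqr_ge0 // ltW.
rewrite mul1r => /(ler_wpM2l b0) /(ler_wpM2l (ltW r0)) h.
apply: le_trans (le_trans h _); rewrite le_eqVlt; apply/orP; left; apply/eqP.
  by ring.
by ring.
Qed.

Lemma Q_B4 b r x : 0 <= b -> 0 < r -> 0 <= x -> Qf b r x / r <= b * (1 - x) ^+ 2 * r.
Proof.
move=> b0 r0 x0.
have hn := numf_gt0 b r x b0 r0 x0.
have -> : Qf b r x / r = b * (1 - x) ^+ 2 * r / numf b r x.
  by rewrite /Qf; field; rewrite !gt_eqF.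
rewrite ler_pdivrMr // -{1}[b * _ * r]mulr1; apply: ler_wpM2l.
  apply: mulr_ge0; [apply: mulr_ge0 => //; exact: sqr_ge0 | exact: ltW].
rewrite /numf.
have e1 : 1 <= (r + 1) ^+ 2 by rewrite -[1](expr1n _ 2) lerXn2r ?nnegrE; lra.
have := Kpos b r x b0 r0 x0.
move=> h; have := ler_pM ler01 ler01 e1 h; rewrite mul1r.
done.
Qed.

Lemma C_B1 r x : 0 < r -> 0 <= x -> 0 <= ln (1 + x * r) / r <= x.
Proof.
move=> r0 x0; apply/andP; split.
  have : 0 <= x * r by apply: mulr_ge0 => //; exact: ltW.
  move=> xr; apply: divr_ge0; last exact: ltW.
  apply: ln_ge0; lra.
rewrite ler_pdivrMr //; apply: le_ln1Dx.
have : 0 <= x * r by apply: mulr_ge0 => //; exact: ltW.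
lra.
Qed.

Lemma C_B2 r x : 0 < r -> 0 <= x -> x - r * x ^+ 2 <= ln (1 + x * r) / r.
Proof.
move=> r0 x0.
have xr0 : 0 <= x * r by apply: mulr_ge0 => //; exact: ltW.
have y0 : 0 < 1 + x * r by lra.
have h : 1 - (1 + x * r)^-1 <= ln (1 + x * r).
  have : ln (1 + ((1 + x * r)^-1 - 1)) <= (1 + x * r)^-1 - 1.
    apply: le_ln1Dx; have : 0 < (1 + x * r)^-1 by rewrite invr_gt0.
    lra.
  rewrite addrC subrK lnV ?posrE //; lra.
rewrite ler_pdivlMr //; apply: le_trans h.
have -> : 1 - (1 + x * r)^-1 = x * r / (1 + x * r) by field; rewrite gt_eqF.
rewrite ler_pdivlMr //.
have : 0 <= (x * r) ^+ 3 by apply: exprn_ge0.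
have -> : (x - r * x ^+ 2) * r * (1 + x * r) = x * r - (x * r) ^+ 3 by ring.
lra.
Qed.

Lemma Q_any b r x : 0 <= b -> 0 < r -> 0 <= x ->
  Qf b r x <= b * (1 + r) + b * (1 + r) * x.
Proof.
move=> b0 r0 x0.
have hb : 0 <= b * (1 + x) by rewrite mulr_ge0 //; lra.
have -> : b * (1 + r) + b * (1 + r) * x = b * (1 + x) * (1 + r) by ring.
have [r1|r1] := lerP r 1.
  have h := Q_B3 b r x b0 r0 r1 x0.
  have -> : Qf b r x = Qf b r x / r * r by rewrite divfK // gt_eqF.
  apply: le_trans (ler_pM _ _ h (_ : r <= 1 + r)) _.
  - by apply: divr_ge0; [have := Hf_Q b r x b0 r0 x0; case/andP => h1 h2; apply: le_trans h2 | exact: ltW].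
  - exact: ltW.
  - lra.
  - by [].
have h := Q_B1 b r x b0 (ltW r1) x0.
apply: le_trans h _; rewrite -{1}[b * (1 + x)]mulr1; apply: ler_wpM2l => //; lra.
Qed.

End Alg.
Arguments Hf_Q {R b r x}. Arguments Q_B1 {R b r x}. Arguments Q_B2 {R b r x}.
Arguments Q_B3 {R b r x}. Arguments Q_B4 {R b r x}. Arguments Q_any {R b r x}.
Arguments Hf {R}. Arguments numf {R}. Arguments denf {R}. Arguments Qf {R}.
Arguments C_B1 {R r x}. Arguments C_B2 {R r x}. Arguments dpc_int_eq {R b r x}.

Section Meas.
Context d (T : measurableType d) (R : realType) (P : probability T R)
  (A : {RV P >-> R}).
Hypothesis A0 : forall t, 0 <= A t.
Hypothesis EA : ('E_P[A] = 1)%E.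

Lemma mA : measurable_fun setT A.
Proof. exact: measurable_funP. Qed.

Lemma iA : P.-integrable setT (EFin \o A).
Proof.
apply/integrableP; split.
  by apply/measurable_realfun.measurable_EFinP; exact: mA.
rewrite (eq_integral (EFin \o A)); last first.
  by move=> t _ /=; rewrite ger0_norm.
by move: EA; rewrite unlock => ->; exact: ltry.
Qed.

Lemma int_dom (g : T -> R) (c0 c1 : R) : measurable_fun setT g ->
  (forall t, `|g t| <= c0 + c1 * A t) -> P.-integrable setT (EFin \o g).
Proof.
move=> mg hg.
have ig : P.-integrable setT (fun t => (c0 + c1 * A t)%:E).
  have := integrableD measurableT (finite_measure_integrable_cst P c0 measurableT)
     (integrableZl measurableT c1 iA).
  apply: (eq_integrable measurableT) => t _ /=; by rewrite EFinD EFinM.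
apply: (le_integrable measurableT _ _ ig).
  by apply/measurable_realfun.measurable_EFinP.
move=> t _ /=; rewrite lee_fin; apply: le_trans (hg t) _.
exact: ler_norm.
Qed.

Lemma meas_ln (c0 c1 : R) : measurable_fun setT (fun t => ln (c0 + c1 * A t)).
Proof.
apply: measurableT_comp => //; apply: measurable_realfun.measurable_funD => //.
apply: measurable_realfun.measurable_funM => //; exact: mA.
Qed.


Lemma ig_aff (c0 c1 : R) : P.-integrable setT (fun t => (c0 + c1 * A t)%:E).
Proof.
have := integrableD measurableT (finite_measure_integrable_cst P c0 measurableT)
   (integrableZl measurableT c1 iA).
apply: (eq_integrable measurableT) => t _ /=; by rewrite EFinD EFinM.
Qed.

Lemma PA0 : has_pdf A -> P (A @^-1` [set 0]) = 0%E.
Proof.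
move=> [f [_ [_ hf]]].
have := hf [set 0] (measurable_set1 0).
by rewrite integral_set1.
Qed.

Lemma seq_dct (hp : has_pdf A) (F : nat -> T -> R) (G : T -> R) (c0 c1 : R) :
  (forall n, measurable_fun setT (F n)) -> measurable_fun setT G ->
  (forall t, 0 < A t -> F n t @[n --> \oo] --> G t) ->
  (forall n t, `|F n t| <= c0 + c1 * A t) ->
  fine (\int[P]_t (F n t)%:E)%E @[n --> \oo] --> fine (\int[P]_t (G t)%:E)%E.
Proof.
move=> mF mG FG hb.
have := @dominated_convergence _ _ _ P setT measurableT (fun n t => (F n t)%:E)
  (EFin \o G) (fun t => (c0 + c1 * A t)%:E).
case.
- by move=> n; apply/measurable_realfun.measurable_EFinP.
- by apply/measurable_realfun.measurable_EFinP.
- apply: (negligibleS (A := A @^-1` [set 0])); last first.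
    by apply/negligibleP; [exact: measurable_funPTI (measurable_set1 0) | exact: PA0].
  move=> t /= ht; apply: contrapT => hA; apply: ht => _.
  have At : 0 < A t by rewrite lt_neqAle A0 andbT eq_sym; apply/eqP.
  by apply/fine_cvgP; split; [exact: nearW | exact: FG].
- exact: ig_aff.
- by apply: aeW => t n _ /=; rewrite lee_fin.
move=> iG _ h.
have fG : (\int[P]_t (EFin \o G) t)%E \is a fin_num by exact: integrable_fin_num.
rewrite -(fineK fG) in h.
exact: (fine_cvg h).
Qed.


Lemma mHf b r : measurable_fun setT (fun t => Hf b r (A t)).
Proof.
have -> : (fun t => Hf b r (A t)) = (fun t => ln (1 + r * A t) +
   ln (((b + 1) * r ^+ 2 + 2%:R * r + 1) + (b * r) * A t) -
   ln ((r + 1) ^+ 2 + ((r + 1) ^+ 2 * (1 + b) * r) * A t)).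
  apply/funext => t; rewrite /Hf.
  have -> : denf b r (A t) = ((b + 1) * r ^+ 2 + 2%:R * r + 1) + (b * r) * A t.
    by rewrite /denf; ring.
  have -> : numf b r (A t) = (r + 1) ^+ 2 + ((r + 1) ^+ 2 * (1 + b) * r) * A t.
    by rewrite /numf; ring.
  by rewrite [A t * r]mulrC.
apply: measurable_realfun.measurable_funB; last exact: meas_ln.
by apply: measurable_realfun.measurable_funD; exact: meas_ln.
Qed.

Lemma mL1 r : measurable_fun setT (fun t => ln (1 + A t * r)).
Proof.
have -> : (fun t => ln (1 + A t * r)) = (fun t => ln (1 + r * A t)).
  by apply/funext => t; rewrite mulrC.
exact: meas_ln.
Qed.

Lemma iL1 r : 0 < r -> P.-integrable setT (EFin \o (fun t => ln (1 + A t * r))).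
Proof.
move=> r0; apply: (@int_dom _ 0 r); first exact: mL1.
move=> t; have := C_B1 r0 (A0 t); case/andP => h1 h2.
have : 0 <= ln (1 + A t * r) by apply: le_trans (mulr_ge0 h1 (ltW r0)) _; rewrite divfK ?gt_eqF.
move=> h3; rewrite ger0_norm // add0r [r * _]mulrC.
by move: h2; rewrite ler_pdivrMr.
Qed.

Lemma iHf b r : 0 <= b -> 0 < r -> P.-integrable setT (EFin \o (fun t => Hf b r (A t))).
Proof.
move=> b0 r0; apply: (@int_dom _ (b * (1 + r)) (b * (1 + r))); first exact: mHf.
move=> t; have := Hf_Q b0 r0 (A0 t); case/andP => h1 h2.
rewrite ger0_norm //; apply: le_trans h2 _; exact: Q_any.
Qed.

Lemma fine_int_div (g : T -> R) (c : R) : P.-integrable setT (EFin \o g) ->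
  fine (\int[P]_t (g t / c)%:E)%E = fine (\int[P]_t (g t)%:E)%E / c.
Proof.
move=> ig.
have fg : (\int[P]_t (EFin \o g) t)%E \is a fin_num by exact: integrable_fin_num.
rewrite (eq_integral (fun t => (g t)%:E * c^-1%:E)%E); last by move=> t _; rewrite EFinM.
rewrite (integralZr measurableT ig) -(fineK fg) -EFinM /=.
by [].
Qed.


Definition Eh b r := fine (\int[P]_t (Hf b r (A t))%:E)%E.

Lemma dpc_eq b r : 0 <= b -> 0 < r -> dpc_rate P A b r = cap_known P A r - Eh b r.
Proof.
move=> b0 r0; rewrite /dpc_rate /cap_known /Eh unlock.
rewrite (eq_integral (fun t => (ln (1 + A t * r))%:E - (Hf b r (A t))%:E)%E); last first.
  by move=> t _; rewrite -EFinB -(dpc_int_eq b0 r0 (A0 t)).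
rewrite (integralB_EFin measurableT (iL1 r r0) (iHf b r b0 r0)).
rewrite fineB //; apply: integrable_fin_num => //.
- exact: iL1.
- exact: iHf.
Qed.

Lemma Eh_lim (hp : has_pdf A) b : 0 <= b -> Eh b r @[r --> +oo] --> 0.
Proof.
move=> b0; apply/cvg_pinftyP => u ucvg.
pose v n := Num.max (u n) 1.
have vu : \forall n \near \oo, v n = u n.
  move: (ucvg) => /cvgryPge /(_ 1); apply: filterS => n h.
  by rewrite /v; apply/max_idPl.
have e : \forall n \near \oo, Eh b (v n) = Eh b (u n) by apply: filterS vu => n ->.
apply: cvg_trans (near_eq_cvg e) _ => /=.
have v1 n : 1 <= v n by rewrite /v le_max lexx orbT.
have v0 n : 0 < v n by apply: lt_le_trans (v1 n).
have vcvg : v n @[n --> \oo] --> +oo.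
  by apply: ger_cvgy ucvg; apply: nearW => n; rewrite /v le_max lexx.
have vV : (v n)^-1 @[n --> \oo] --> 0.
  by apply/gtr0_cvgV0; [exact: nearW | exact: vcvg].
rewrite (_ : 0 = fine (\int[P]_t (cst 0 t)%:E)%E); last by rewrite integral0.
apply: (@seq_dct hp (fun n t => Hf b (v n) (A t)) (cst 0) b b).
- by move=> n; exact: mHf.
- exact: measurable_cst.
- move=> t At.
  pose c := b * (1 - A t) ^+ 2 / A t.
  apply: (@squeeze_cvgr _ _ _ _ (cst 0) (fun n => c * (v n)^-1)).
  + apply: nearW => n; have := Hf_Q b0 (v0 n) (A0 t); case/andP => -> h /=.
    apply: le_trans h _; have := Q_B2 b0 (v0 n) At.
    by rewrite /c mulrA.
  + exact: cvg_cst.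
  + by rewrite /= -(mulr0 c); apply: cvgMl_tmp; exact: vV.
- move=> n t0; have := Hf_Q b0 (v0 n) (A0 t0); case/andP => h1 h2.
  rewrite ger0_norm //; apply: le_trans h2 _.
  by have := Q_B1 b0 (v1 n) (A0 t0); rewrite mulrDr mulr1.
Qed.


Definition Ec r := fine (\int[P]_t (ln (1 + A t * r) / r)%:E)%E.
Definition Eq b r := fine (\int[P]_t (Hf b r (A t) / r)%:E)%E.

Lemma min_seq (u : R ^nat) : (forall n, 0 < u n) -> u n @[n --> \oo] --> 0 ->
  let v := fun n => Num.min (u n) 1 in
  [/\ forall n, 0 < v n, forall n, v n <= 1, v n @[n --> \oo] --> 0 &
    \forall n \near \oo, v n = u n].
Proof.
move=> u0 ucvg v; split.
- by move=> n; rewrite /v lt_min u0 ltr01.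
- by move=> n; rewrite /v ge_min lexx orbT.
- apply: (@squeeze_cvgr _ _ _ _ (cst 0) u); last first.
  + exact: ucvg.
  + exact: cvg_cst.
  + apply: nearW => n /=; apply/andP; split; last by rewrite /v ge_min lexx.
    by apply: ltW; rewrite /v lt_min u0 ltr01.
- have : \forall n \near \oo, u n < 1 by apply: (cvgr_lt 0); [exact: ucvg | exact: ltr01].
  apply: filterS => n h.
  by rewrite /v; apply/min_idPl; apply: ltW.
Qed.

Lemma Ec_lim (hp : has_pdf A) : Ec r @[r --> 0^'+] --> (1 : R).
Proof.
apply/cvg_at_rightP => u [u0 ucvg].
have [v0 v1 vcvg vu] := min_seq u u0 ucvg.
pose v := fun n => Num.min (u n) 1.
have {v0}v0 : forall n, 0 < v n := v0.
have {v1}v1 : forall n, v n <= 1 := v1.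
have {vu}vu : \forall n \near \oo, v n = u n := vu.
have e : \forall n \near \oo, Ec (v n) = Ec (u n) by apply: filterS vu => n ->.
apply: cvg_trans (near_eq_cvg e) _ => /=.
have -> : (1 : R) = fine (\int[P]_t (A t)%:E)%E by move: EA; rewrite unlock => ->.
apply: (@seq_dct hp (fun n t => ln (1 + A t * v n) / v n) A 0 1).
- move=> n; apply: measurable_realfun.measurable_funM => //; exact: mL1.
- exact: mA.
- move=> t _.
  apply: (@squeeze_cvgr _ _ _ _ (fun n => A t - v n * A t ^+ 2) (cst (A t))).
  + apply: nearW => n; have := C_B1 (v0 n) (A0 t); case/andP => _ ->.
    by rewrite C_B2 ?v0.
  + rewrite -[X in _ --> X]subr0; apply: cvgB; first exact: cvg_cst.
    by rewrite -(mul0r (A t ^+ 2)); apply: cvgMr_tmp.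
  + exact: cvg_cst.
- move=> n t; have := C_B1 (v0 n) (A0 t); case/andP => h1 h2.
  by rewrite ger0_norm // add0r mul1r.
Qed.

Lemma Eq_lim (hp : has_pdf A) b : 0 <= b -> Eq b r @[r --> 0^'+] --> 0.
Proof.
move=> b0; apply/cvg_at_rightP => u [u0 ucvg].
have [v0 v1 vcvg vu] := min_seq u u0 ucvg.
pose v := fun n => Num.min (u n) 1.
have {v0}v0 : forall n, 0 < v n := v0.
have {v1}v1 : forall n, v n <= 1 := v1.
have {vu}vu : \forall n \near \oo, v n = u n := vu.
have e : \forall n \near \oo, Eq b (v n) = Eq b (u n) by apply: filterS vu => n ->.
apply: cvg_trans (near_eq_cvg e) _ => /=.
rewrite (_ : 0 = fine (\int[P]_t (cst 0 t)%:E)%E); last by rewrite integral0.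
apply: (@seq_dct hp (fun n t => Hf b (v n) (A t) / v n) (cst 0) b b).
- move=> n; apply: measurable_realfun.measurable_funM => //; exact: mHf.
- exact: measurable_cst.
- move=> t _.
  apply: (@squeeze_cvgr _ _ _ _ (cst 0) (fun n => b * (1 - A t) ^+ 2 * v n)).
  + apply: nearW => n; have := Hf_Q b0 (v0 n) (A0 t); case/andP => h1 h2 /=.
    have h0 : 0 <= Hf b (v n) (A t) / v n by apply: divr_ge0 => //; exact: ltW.
    rewrite h0 /=; apply: (le_trans _ (Q_B4 b0 (v0 n) (A0 t))).
    by rewrite ler_pM2r ?invr_gt0 ?v0.
  + exact: cvg_cst.
  + by rewrite /= -(mulr0 (b * (1 - A t) ^+ 2)); apply: cvgMl_tmp.
- move=> n t; have := Hf_Q b0 (v0 n) (A0 t); case/andP => h1 h2.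
  have h0 : 0 <= Hf b (v n) (A t) / v n by apply: divr_ge0 => //; exact: ltW.
  rewrite ger0_norm //.
  have h3 : Hf b (v n) (A t) / v n <= Qf b (v n) (A t) / v n.
    by rewrite ler_pM2r ?invr_gt0 ?v0.
  apply: (le_trans h3); apply: (le_trans (Q_B3 b0 (v0 n) (v1 n) (A0 t))).
  by rewrite mulrDr mulr1.
Qed.

End Meas.

Lemma ratio_eq (R : realType) (c h r : R) : r != 0 ->
  (c / r - h / r) / (c / r) = (c - h) / c.
Proof.
move=> r0; have [->|c0] := eqVneq c 0; first by rewrite !mul0r invr0 !mulr0.
by field; apply/andP.
Qed.

Theorem mainTheorem1 (d : measure_display) (T : measurableType d) (R : realType)
    (P : probability T R) (A : {RV P >-> R}) (beta : R) :
  (forall t, 0 <= A t) ->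
  has_pdf A ->
  ('E_P[A] = 1)%E ->
  0 <= beta ->
  (cap_known P A rho - dpc_rate P A beta rho @[rho --> +oo] --> (0 : R)) /\
  (dpc_rate P A beta rho / cap_known P A rho @[rho --> 0^'+] --> (1 : R)).
Proof.
move=> A0 hp EA b0; split.
- have e : \forall r \near +oo, @Eh _ _ _ P A beta r = cap_known P A r - dpc_rate P A beta r.
    have := @nbhs_pinfty_gt R 0 (num_real 0); apply: filterS => r r0.
    by rewrite (@dpc_eq _ _ _ P A A0 EA) // opprB addrC subrK.
  apply: cvg_trans (near_eq_cvg e) _.
  exact: (@Eh_lim _ _ _ P A A0 EA hp beta b0).
- have e : \forall r \near 0^'+, (@Ec _ _ _ P A r - @Eq _ _ _ P A beta r) / @Ec _ _ _ P A r =
      dpc_rate P A beta r / cap_known P A r.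
    have := @nbhs_right_gt R 0; apply: filterS => r r0.
    rewrite (@dpc_eq _ _ _ P A A0 EA) // /Ec /Eq (@fine_int_div _ _ _ P _ r (@iL1 _ _ _ P A A0 EA r r0)) (@fine_int_div _ _ _ P _ r (@iHf _ _ _ P A A0 EA beta r b0 r0)).
    rewrite ratio_eq ?gt_eqF //.
    by rewrite /cap_known unlock.
  apply: cvg_trans (near_eq_cvg e) _.
  rewrite (_ : (1 : R) = (1 - 0) / 1); last by rewrite subr0 divr1.
  apply: cvgM; last by apply: cvgV; [exact: oner_neq0 | exact: (@Ec_lim _ _ _ P A A0 EA hp)].
  apply: cvgB; [exact: (@Ec_lim _ _ _ P A A0 EA hp) | exact: (@Eq_lim _ _ _ P A A0 EA hp beta b0)].
Qed.
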